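(* Let $(a_N)$ be a sequence of positive numbers and, for each $N$, let $P_{N,a_N}$ be the probability on sequences $(n_j)_{j\ge0}$ of nonnegative integers with $\sum_jn_j=N$ given by $P_{N,a_N}((n_j))\propto e^{-a_N\sum_jjn_j}$, with $\langle n_0\rangle_{N,a_N}$ the expectation of $n_0$. Let $\lambda_N=1-m_N/N$ with integers $0\le m_N\le N$. Suppose $\lambda_N\to\lambda\le1$ and $(1-\lambda_N)Na_N-\ln N\to\infty$. Then $P_{N,a_N}(n_0/N\ge\lambda_N)\to1$ and $\lim_{N\to\infty}\frac1N\langle n_0\rangle_{N,a_N}\ge\lambda$. If $Na_N/\ln N\to\infty$, then $\frac1N\langle n_0\rangle_{N,a_N}\to1$, i.e. there is complete Bose–Einstein condensation.
   Context: This is the canonical ensemble of $N$ noninteracting bosons in a one-dimensional harmonic trap, $n_j$ being the occupation of the $j$-th level and $a_N=\beta(\varepsilon_1-\varepsilon_0)$. *)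

(* Defs.v *)
From HB Require Import structures.
From mathcomp Require Import all_boot all_order all_algebra finmap.
From mathcomp Require Import all_classical all_reals all_analysis.
Set Implicit Arguments. Unset Strict Implicit. Unset Printing Implicit Defensive.
Import Order.TTheory GRing.Theory Num.Theory.
Local Open Scope classical_set_scope.
Local Open Scope ring_scope.

Definition occ := {fsfun nat -> nat with 0%N}.

Definition occ_total (n : occ) : nat := (\sum_(j <- finsupp n) n j)%N.

Definition occ_energy (n : occ) : nat := (\sum_(j <- finsupp n) j * n j)%N.

Definition configs (N : nat) : set occ := [set n | occ_total n = N].

Definition bweight {R : realType} (a : R) (n : occ) : R :=
  expR (- a * (occ_energy n)%:R).

Definition Zpart {R : realType} (N : nat) (a : R) : \bar R :=
  esum (configs N) (fun n => (bweight a n)%:E).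

Definition Pcan {R : realType} (N : nat) (a : R) (A : set occ) : R :=
  fine (esum (configs N `&` A) (fun n => (bweight a n)%:E)) / fine (Zpart N a).

Definition mean_n0 {R : realType} (N : nat) (a : R) : R :=
  fine (esum (configs N) (fun n => ((n 0%N)%:R * bweight a n)%:E)) / fine (Zpart N a).

(* Main.v *)
Require Import Defs.
From HB Require Import structures.
From mathcomp Require Import all_boot all_order all_algebra finmap.
From mathcomp Require Import all_classical all_reals all_analysis.
From mathcomp.algebra_tactics Require Import ring lra.
From mathcomp.zify Require Import zify.
Import Order.TTheory GRing.Theory Num.Theory numFieldNormedType.Exports.
Local Open Scope classical_set_scope.
Local Open Scope ring_scope.
Section Comb.
Local Open Scope nat_scope.

Lemma sum_supp (n : occ) (F : nat -> nat -> nat) L :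
  (forall j, F j 0 = 0) -> (forall j, L <= j -> n j = 0) ->
  \sum_(j <- finsupp n) F j (n j) = \sum_(j < L) F j (n j).
Proof.
move=> F0 nL; rewrite -(big_mkord xpredT (fun j => F j (n j))).
rewrite [RHS](bigID (mem (finsupp n))) /= [X in _ = _ + X]big1 ?addn0; last first.
  by move=> j; rewrite memNfinsupp => /eqP ->.
rewrite -[RHS]big_filter; apply: perm_big; apply: uniq_perm.
- exact: fset_uniq.
- by rewrite filter_uniq // iota_uniq.
move=> j; rewrite mem_filter mem_iota /= add0n subn0.
case: (boolP (j \in finsupp n)) => //= hj; symmetry.
rewrite mem_finsupp in hj; case: (ltnP j L) => // hL.
by move: hj; rewrite /= nL.
Qed.

Definition bnd (n : occ) : nat := (\max_(j <- finsupp n) j).+1.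

Lemma bndP (n : occ) j : bnd n <= j -> n j = 0.
Proof.
move=> hj; apply/eqP; rewrite -[_ == _]/(n j == 0) .
have := memNfinsupp n j; rewrite /= => <-.
apply/negP => hs.
have := @leq_bigmax_seq nat _ xpredT (fun j : nat => j) j hs isT.
rewrite /bnd in hj; move=> h; have := leq_ltn_trans h hj; by rewrite ltnn.
Qed.

Lemma totE (n : occ) L : (forall j, L <= j -> n j = 0) ->
  occ_total n = \sum_(j < L) n j.
Proof. by move=> h; rewrite /occ_total (@sum_supp n (fun _ v => v) L). Qed.

Lemma enE (n : occ) L : (forall j, L <= j -> n j = 0) ->
  occ_energy n = \sum_(j < L) j * n j.
Proof. by move=> h; rewrite /occ_energy (@sum_supp n (fun j v => j * v) L) // => j; rewrite muln0. Qed.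

End Comb.
Section Ops.
Local Open Scope nat_scope.

Definition occ_rem (n : occ) (t : nat) : occ := [fsfun n with t |-> (n t).-1].

Lemma occ_remE (n : occ) t j : occ_rem n t j = if j == t then (n t).-1 else n j.
Proof. by rewrite /occ_rem fsfun_withE. Qed.

Definition occ_low (n : occ) : occ :=
  [fsfun j in (0 |` [fset i.-1 | i in finsupp n])%fset =>
     if j == 0 then n 0 + n 1 else n j.+1].

Lemma occ_lowE (n : occ) j : occ_low n j = if j == 0 then n 0 + n 1 else n j.+1.
Proof.
rewrite /occ_low fsfunE; case: ifP => //.
case: eqP => [->|_]; first by rewrite !inE eqxx.
move=> hj; apply/esym/eqP; rewrite -[_ == _]/(n j.+1 == 0).
have := memNfinsupp n j.+1; rewrite /= => <-.
apply/negP => hs; move/negP: hj; apply; rewrite !inE; apply/orP; right.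
by apply/imfsetP; exists j.+1.
Qed.

Definition occ0 (N : nat) : occ := [fsfun [fsfun] with 0 |-> N].

Lemma occ0E N j : occ0 N j = if j == 0 then N else 0.
Proof. by rewrite /occ0 fsfun_withE fsfunE. Qed.

Lemma tot_occ0 N : occ_total (occ0 N) = N.
Proof.
rewrite (@totE _ 1); first by rewrite big_ord1 occ0E.
by move=> j hj; rewrite occ0E; case: eqP => // e; rewrite e in hj.
Qed.

Lemma en_occ0 N : occ_energy (occ0 N) = 0.
Proof.
rewrite (@enE _ 1); first by rewrite big_ord1 occ0E.
by move=> j hj; rewrite occ0E; case: eqP => // e; rewrite e in hj.
Qed.

Lemma low_zero (n : occ) L : (forall j, L <= j -> n j = 0) -> forall j, L <= j -> occ_low n j = 0.
Proof.
move=> h j hj; rewrite occ_lowE; case: eqP => [e|_]; last by apply: h; lia.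
subst j; rewrite !h //; lia.
Qed.

Lemma tot_low (n : occ) : occ_total (occ_low n) = occ_total n.
Proof.
set L := bnd n.
have hn : forall j, L.+2 <= j -> n j = 0 by move=> j hj; apply: bndP; lia.
have hl : forall j, L.+1 <= j -> occ_low n j = 0.
  apply: low_zero => j hj; apply: bndP; lia.
rewrite (@totE _ _ hl) (@totE _ _ hn) big_ord_recl [RHS]big_ord_recl [in RHS]big_ord_recl.
rewrite occ_lowE /= addnA; congr (_ + _).
by apply: eq_bigr => i _; rewrite occ_lowE.
Qed.

Lemma en_low (n : occ) : occ_energy n = occ_energy (occ_low n) + (occ_total n - n 0).
Proof.
set L := bnd n.
have hn : forall j, L.+2 <= j -> n j = 0 by move=> j hj; apply: bndP; lia.
have hl : forall j, L.+1 <= j -> occ_low n j = 0.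
  apply: low_zero => j hj; apply: bndP; lia.
rewrite (@enE _ _ hl) (@enE _ _ hn) (@totE _ _ hn) big_ord_recl [X in _ = _ + (X - _)]big_ord_recl.
rewrite addKn big_ord_recl [in RHS]big_ord_recl big_ord_recl /=.
rewrite mul0n !add0n mul1n /bump /=.
have -> : \sum_(i < L) (1 + i) * occ_low n (1 + i) = \sum_(i < L) (1+i) * n (1 + (1+i)).
  by apply: eq_bigr => i _; rewrite occ_lowE.
rewrite [RHS]addnCA -big_split /=; congr (_ + _); apply: eq_bigr => i _; lia.
Qed.

Lemma low_inj (n n' : occ) : n 0 = n' 0 -> occ_low n = occ_low n' -> n = n'.
Proof.
move=> h0 hl; apply/fsfunP => j.
have e k : occ_low n k = occ_low n' k by rewrite hl.
case: j => [//|[|k]].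
- by have := e 0; rewrite !occ_lowE /= h0 => /addnI.
- by have := e k.+1; rewrite !occ_lowE.
Qed.

Lemma supp_lt (n : occ) j : 0 < n j -> j < bnd n.
Proof. by move=> h; rewrite ltnNge; apply/negP => /bndP; lia. Qed.

Lemma tot_rem (n : occ) t : 0 < n t -> occ_total n = (occ_total (occ_rem n t)).+1.
Proof.
move=> ht; set L := bnd n.
have hn : forall j, L <= j -> n j = 0 by move=> j hj; apply: bndP.
have tL : t < L by apply: supp_lt.
have hr : forall j, L <= j -> occ_rem n t j = 0.
  by move=> j hj; rewrite occ_remE; case: eqP => [e|_]; [lia|apply: hn].
rewrite (@totE _ _ hn) (@totE _ _ hr) (bigD1 (Ordinal tL)) //= [in RHS](bigD1 (Ordinal tL)) //=.
rewrite occ_remE eqxx -addSn prednK //; congr (_ + _).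
apply: eq_bigr => i hi; rewrite occ_remE; case: eqP => // e.
by move: hi; rewrite -val_eqE /= e eqxx.
Qed.

Lemma en_rem (n : occ) t : 0 < n t -> occ_energy n = occ_energy (occ_rem n t) + t.
Proof.
move=> ht; set L := bnd n.
have hn : forall j, L <= j -> n j = 0 by move=> j hj; apply: bndP.
have tL : t < L by apply: supp_lt.
have hr : forall j, L <= j -> occ_rem n t j = 0.
  by move=> j hj; rewrite occ_remE; case: eqP => [e|_]; [lia|apply: hn].
rewrite (@enE _ _ hn) (@enE _ _ hr) (bigD1 (Ordinal tL)) //= [in RHS](bigD1 (Ordinal tL)) //=.
rewrite occ_remE eqxx.
have -> : \sum_(i < L | i != Ordinal tL) i * occ_rem n t i =
          \sum_(i < L | i != Ordinal tL) i * n i.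
  apply: eq_bigr => i hi; rewrite occ_remE; case: eqP => // e.
  by move: hi; rewrite -val_eqE /= e eqxx.
have : n t = (n t).-1.+1 by rewrite prednK.
move: ((n t).-1) => k ->; move: (\sum_(i < L | _) _) => s; rewrite mulnS; lia.
Qed.

Lemma rem_inj (n n' : occ) t : 0 < n t -> 0 < n' t -> occ_rem n t = occ_rem n' t -> n = n'.
Proof.
move=> h h' e; apply/fsfunP => j.
have := congr1 (fun f : occ => f j) e; rewrite /= !occ_remE.
case: eqP => [->|//] ee; by rewrite -(prednK h) -(prednK h') ee.
Qed.

Definition tpick (n : occ) : nat := head 0 (finsupp n : seq nat).

Lemma tpickP (n : occ) : 0 < occ_total n -> 0 < n (tpick n).
Proof.
rewrite /occ_total /tpick.
have : forall j, j \in (finsupp n : seq nat) -> 0 < n j.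
  by move=> j hj; have := hj; rewrite -[j \in _]/(j \in finsupp n) mem_finsupp lt0n.
case: (finsupp n : seq nat) => [|h s] H; first by rewrite big_nil.
by move=> _; apply: H; rewrite mem_head.
Qed.

End Ops.

Lemma le_tot (n : occ) j : (n j <= occ_total n)%N.
Proof.
case: (ltnP j (bnd n)) => h; last by rewrite bndP.
rewrite (@totE n (bnd n) (@bndP n)) (bigD1 (Ordinal h)) //=; exact: leq_addr.
Qed.
Section EsumLemmas.
Variable R : realType.
Local Open Scope ereal_scope.

Lemma esumZl_le (T : choiceType) (f : T -> \bar R) (c : R) :
  (0 <= c)%R -> (forall i, 0 <= f i) ->
  \esum_(i in [set: T]) (c%:E * f i) <= c%:E * \esum_(i in [set: T]) f i.
Proof.
move=> c0 f0; apply: ge_ereal_sup => _ [X [finX XS] <-].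
rewrite -ge0_mule_fsumr //; apply: lee_wpmul2l; first by rewrite lee_fin.
by apply: ereal_sup_ubound; exists X.
Qed.

Lemma esumZlT (T : choiceType) (f : T -> \bar R) (c : R) :
  (0 <= c)%R -> (forall i, 0 <= f i) ->
  \esum_(i in [set: T]) (c%:E * f i) = c%:E * \esum_(i in [set: T]) f i.
Proof.
move=> c0 f0; apply/eqP; rewrite eq_le esumZl_le //=.
have [->|cn0] := eqVneq c 0%R.
  by rewrite mul0e esum_ge0 // => i _; rewrite mul0e.
have cp : (0 < c)%R by rewrite lt_neqAle eq_sym cn0.
have e : \esum_(i in [set: T]) f i =
   \esum_(i in [set: T]) (c^-1%:E * (c%:E * f i)).
  by apply: eq_esum => i _; rewrite muleA -EFinM mulVf // mul1e.
rewrite e; have := @esumZl_le T (fun i => c%:E * f i) c^-1.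
have h : forall i, 0 <= c%:E * f i by move=> i; apply: mule_ge0 => //; rewrite lee_fin ltW.
rewrite invr_ge0 (ltW cp) => /(_ isT h).
move=> /(lee_wpmul2l (x:=c%:E)); rewrite lee_fin (ltW cp) => /(_ isT).
by rewrite muleA -EFinM mulfV // mul1e.
Qed.

Lemma esumZl (T : choiceType) (S : set T) (f : T -> \bar R) (c : R) :
  (0 <= c)%R -> (forall i, S i -> 0 <= f i) ->
  \esum_(i in S) (c%:E * f i) = c%:E * \esum_(i in S) f i.
Proof.
move=> c0 f0; rewrite esum_mkcond [in RHS]esum_mkcond -esumZlT //.
  by apply: eq_esum => i _; case: ifP => //; rewrite mule0.
by move=> i; case: ifP => // /set_mem /f0.
Qed.

Lemma esum_sub (T : choiceType) (A B : set T) (f : T -> \bar R) :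
  A `<=` B -> (forall i, B i -> 0 <= f i) ->
  \esum_(i in A) f i <= \esum_(i in B) f i.
Proof.
move=> AB f0; rewrite esum_mkcond [in leRHS]esum_mkcond; apply: le_esum => i _.
case: ifP => [/set_mem/AB/mem_set -> //|_]; case: ifP => // /set_mem /f0 //.
Qed.

End EsumLemmas.
Section Weights.
Variables (R : realType) (a : R).
Hypothesis ha : 0 < a.
Local Notation x := (expR (- a)).

Lemma x_gt0 : 0 < x. Proof. exact: expR_gt0. Qed.
Lemma x_lt1 : x < 1. Proof. by rewrite expR_lt1 oppr_lt0. Qed.

Lemma bweightE (n : occ) : bweight a n = x ^+ occ_energy n.
Proof. by rewrite /bweight expRM_natr. Qed.

Lemma bweight_gt0 (n : occ) : 0 < bweight a n.
Proof. exact: expR_gt0. Qed.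

Lemma w_low (n : occ) :
  bweight a n = bweight a (occ_low n) * x ^+ (occ_total n - n 0)%N.
Proof. by rewrite !bweightE {1}en_low exprD. Qed.

Lemma w_rem (n : occ) t : (0 < n t)%N ->
  bweight a n = bweight a (occ_rem n t) * x ^+ t.
Proof. by move=> h; rewrite !bweightE (@en_rem n t h) exprD. Qed.

Lemma geo_sum n : (1 - x) * \sum_(k < n) x ^+ k = 1 - x ^+ n.
Proof.
elim: n => [|n IH]; first by rewrite big_ord0 mulr0 expr0 subrr.
by rewrite big_ord_recr /= mulrDr IH exprS; ring.
Qed.

Definition Gr : R := (1 - x)^-1.

Lemma G_le : (\esum_(t in [set: nat]) (x ^+ t)%:E <= Gr%:E)%E.
Proof.
rewrite -nneseries_esumT; last by move=> n; rewrite lee_fin exprn_ge0 // ltW // x_gt0.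
apply: lime_le; first by apply: is_cvg_nneseries => n _ _; rewrite lee_fin exprn_ge0 // ltW // x_gt0.
apply: nearW => n /=; rewrite sumEFin lee_fin big_mkord.
have h1 : 0 < 1 - x by rewrite subr_gt0 x_lt1.
have e : \sum_(k < n) x ^+ k = Gr * (1 - x ^+ n) by rewrite /Gr -geo_sum mulKf // lt0r_neq0.
rewrite e /Gr ler_piMr ?invr_ge0 ?(ltW h1) //; have := exprn_ge0 n (ltW x_gt0); lra.
Qed.

Lemma Gr_ge0 : 0 <= Gr.
Proof. by rewrite /Gr invr_ge0 subr_ge0 ltW // x_lt1. Qed.

Lemma Z0_le : (Zpart 0 a <= 1)%E.
Proof.
rewrite /Zpart; apply: le_trans (@esum_sub _ _ _ [set occ0 0] _ _ _) _.
- move=> n /= hn; apply/fsfunP => j; rewrite occ0E.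
  have := le_tot n j; rewrite hn; case: eqP => _; lia.
- by move=> i _; rewrite lee_fin ltW // bweight_gt0.
rewrite esum_set1; last by rewrite lee_fin ltW // bweight_gt0.
by rewrite bweightE en_occ0 expr0.
Qed.

Lemma Z_step N : (Zpart N.+1 a <= Gr%:E * Zpart N a)%E.
Proof.
rewrite /Zpart.
pose rho (n : occ) := (occ_rem n (tpick n), tpick n).
pose g' (c : occ) (t : nat) := ((bweight a c) * x ^+ t)%:E.
have e1 : \esum_(n in configs N.+1) (bweight a n)%:E =
          \esum_(n in configs N.+1) g' (rho n).1 (rho n).2.
  apply: eq_esum => n hn; rewrite /g' /rho /= -w_rem // tpickP //.
  by rewrite (hn : occ_total n = N.+1).
have inj : set_inj (configs N.+1) rho.
  move=> n n' hn hn' [] e1' e2'.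
  have p1 : (0 < n (tpick n))%N by apply: tpickP; rewrite (set_mem hn : occ_total n = N.+1).
  have p2 : (0 < n' (tpick n'))%N by apply: tpickP; rewrite (set_mem hn' : occ_total n' = N.+1).
  rewrite -e2' in e1' p2; exact: (@rem_inj _ _ _ p1 p2 e1').
rewrite e1 -(esum_image _ rho (fun p => g' p.1 p.2)) //.
apply: le_trans (@esum_sub _ _ _ (configs N `*`` (fun _ => [set: nat])) _ _ _) _.
- move=> _ [n hn <-]; split => //=; rewrite /configs /=.
  have p1 : (0 < n (tpick n))%N by apply: tpickP; rewrite (hn : occ_total n = N.+1).
  by have := @tot_rem _ _ p1; rewrite (hn : occ_total n = N.+1) => -[].
- by move=> i _; rewrite lee_fin mulr_ge0 // ?exprn_ge0 ?ltW ?x_gt0 ?bweight_gt0.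
rewrite -esum_esum; last by move=> i j _ _; rewrite lee_fin mulr_ge0 // ?exprn_ge0 ?ltW ?x_gt0 ?bweight_gt0.
rewrite -esumZl; last 2 first.
- exact: Gr_ge0.
- by move=> i _; rewrite lee_fin ltW // bweight_gt0.
apply: le_esum => c _.
rewrite (_ : \esum_(t in [set: nat]) g' c t = \esum_(t in [set: nat]) ((bweight a c)%:E * (x ^+ t)%:E)%E); last by apply: eq_esum => t _; rewrite /g' EFinM.
rewrite esumZl; last 2 first.
- by rewrite ltW // bweight_gt0.
- by move=> t _; rewrite lee_fin exprn_ge0 // ltW // x_gt0.
rewrite muleC; apply: lee_wpmul2r; first by rewrite lee_fin ltW // bweight_gt0.
exact: G_le.
Qed.

Lemma Z_le N : (Zpart N a <= (Gr ^+ N)%:E)%E.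
Proof.
elim: N => [|N IH]; first by rewrite expr0 Z0_le.
apply: le_trans (Z_step N) _; rewrite exprS EFinM.
by apply: lee_wpmul2l => //; rewrite lee_fin Gr_ge0.
Qed.

Lemma Z_ge1 N : (1 <= Zpart N a)%E.
Proof.
apply: esum_ge; exists [set occ0 N].
  by split; [exact: finite_set1| move=> n -> ; rewrite /configs /= tot_occ0].
by rewrite fsbig_set1 bweightE en_occ0 expr0.
Qed.

Lemma Z_fin N : Zpart N a \is a fin_num.
Proof.
rewrite ge0_fin_numE; first by apply: le_lt_trans (Z_le N) _; rewrite ltry.
by apply: le_trans (Z_ge1 N).
Qed.

End Weights.
Section Core.
Variables (R : realType) (a : R).
Hypothesis ha : 0 < a.
Local Notation x := (expR (- a)).

Lemma w_ge0E (n : occ) : (0 <= (bweight a n)%:E)%E.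
Proof. by rewrite lee_fin ltW // bweight_gt0. Qed.

Lemma Wk N k : (k <= N)%N ->
  (\esum_(n in configs N `&` [set n : occ | n 0%N = (N - k)%N]) (bweight a n)%:E
    <= (x ^+ k)%:E * Zpart N a)%E.
Proof.
move=> kN; set S := configs N `&` [set n : occ | n 0%N = (N - k)%N].
rewrite (_ : \esum_(n in S) (bweight a n)%:E =
   \esum_(n in S) ((x ^+ k)%:E * (bweight a (occ_low n))%:E)%E); last first.
  apply: eq_esum => n [hn h0]; rewrite [in LHS]w_low.
  by rewrite (hn : occ_total n = N) (h0 : n 0%N = (N - k)%N) subKn // EFinM muleC.
rewrite esumZl; last 2 first.
- by rewrite exprn_ge0 // ltW // x_gt0.
- by move=> n _; exact: w_ge0E.
apply: lee_wpmul2l; first by rewrite lee_fin exprn_ge0 // ltW // x_gt0.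
rewrite -(esum_image S occ_low (fun n => (bweight a n)%:E)); last first.
  move=> n n' /set_mem [_ h0] /set_mem [_ h0'] e.
  apply: low_inj e; by rewrite (h0 : n 0%N = (N - k)%N) (h0' : n' 0%N = (N - k)%N).
apply: esum_sub; last by move=> n _; exact: w_ge0E.
by move=> _ [n [hn _] <-]; rewrite /configs /= tot_low.
Qed.

Lemma bad N m : (m <= N)%N ->
  (\esum_(n in configs N `&` ~` [set n : occ | (N - m <= n 0%N)%N]) (bweight a n)%:E
    <= (N%:R * x ^+ m.+1)%:E * Zpart N a)%E.
Proof.
move=> mN; set B := [set n : occ | (N - m <= n 0%N)%N].
rewrite esum_mkcondr.
apply: (@le_trans _ _ (\esum_(n in configs N) \sum_(m.+1 <= k < N.+1)
    (if n 0%N == (N - k)%N then (bweight a n)%:E else 0%E))).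
  apply: le_esum => n hn; case: ifP => hB; last first.
    by apply: sume_ge0 => k _; case: ifP => // _; exact: w_ge0E.
  have h0 : (n 0%N < N - m)%N.
    by move/set_mem: hB; rewrite /B /setC /= => /negP; rewrite -ltnNge.
  have nN : (n 0%N <= N)%N by have := le_tot n 0; rewrite (hn : occ_total n = N).
  rewrite (bigD1_seq (N - n 0%N)%N) /=; last 2 first.
  - by rewrite mem_index_iota; apply/andP; split; lia.
  - by rewrite /index_iota iota_uniq.
  rewrite subKn // eqxx; apply: leeDl.
  by apply: sume_ge0 => k _; case: ifP => // _; exact: w_ge0E.
rewrite esum_sum; last by move=> n k _ _; case: ifP => // _; exact: w_ge0E.
apply: (@le_trans _ _ (\sum_(m.+1 <= k < N.+1) ((x ^+ k)%:E * Zpart N a)%E)).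
  rewrite big_nat_cond [leRHS]big_nat_cond; apply: lee_sum => k /andP[/andP[h1 h2] _].
  have hk : (k <= N)%N by lia.
  apply: le_trans; last exact: (@Wk N k hk).
  rewrite esum_mkcondr; apply: le_esum => n _.
  case: eqP => [e|ne]; case: ifP => //.
  - by rewrite mem_set.
  - by move=> _; exact: w_ge0E.
rewrite -ge0_sume_distrl; last by move=> k _; rewrite lee_fin exprn_ge0 // ltW // x_gt0.
rewrite sumEFin; apply: lee_wpmul2r; first by apply: le_trans (@Z_ge1 R a N); rewrite lee_fin.
rewrite lee_fin.
apply: (@le_trans _ _ (\sum_(m.+1 <= k < N.+1) x ^+ m.+1)).
  rewrite big_nat_cond [leRHS]big_nat_cond; apply: ler_sum => k /andP[/andP[h1 h2] _].
  apply: ler_wiXn2l; [exact: ltW (@x_gt0 R a)| exact: ltW (@x_lt1 R a ha)| exact: h1].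
rewrite sumr_const_nat -[X in X <= _]mulr_natl; apply: ler_wpM2r; first by rewrite exprn_ge0 // ltW // x_gt0.
rewrite ler_nat; lia.
Qed.

End Core.
Lemma fin_between (R : realType) (y z : \bar R) :
  (0 <= y)%E -> (y <= z)%E -> z \is a fin_num -> y \is a fin_num.
Proof. by move=> y0 yz zf; rewrite ge0_fin_numE //; apply: le_lt_trans yz _; rewrite ltey_eq zf. Qed.
Arguments fin_between {R y z}.

Section Bounds.
Variables (R : realType) (a : R).
Hypothesis ha : 0 < a.
Local Notation x := (expR (- a)).

Lemma P_mean N m : (0 < N)%N -> (m <= N)%N ->
  let P := Pcan N a [set n : occ | (N - m <= n 0%N)%N] in
  [/\ 1 - N%:R * x ^+ m.+1 <= P, P <= 1,
      (N - m)%:R * P <= mean_n0 N a & mean_n0 N a <= N%:R].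
Proof.
move=> N0 mN P.
set B := [set n : occ | (N - m <= n 0%N)%N].
set C := configs N.
have w0 := @w_ge0E R a.
have eZ := esumID B C (fun n => (bweight a n)%:E) (fun i _ => w0 i).
rewrite -/(Zpart N a) in eZ.
set g := esum (C `&` B) _ in eZ.
set b := esum (C `&` ~` B) _ in eZ.
have Zf := @Z_fin R a ha N.
have g0 : (0 <= g)%E by apply: esum_ge0 => i _; exact: w0.
have b0 : (0 <= b)%E by apply: esum_ge0 => i _; exact: w0.
have gf : g \is a fin_num by apply: (fin_between g0 _ Zf); rewrite eZ leeDl.
have bf : b \is a fin_num by apply: (fin_between b0 _ Zf); rewrite eZ leeDr.
have Z1 := @Z_ge1 R a N.
have hb := @bad R a ha N m mN; rewrite -/b in hb.
set M := esum C (fun n => ((n 0%N)%:R * bweight a n)%:E).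
have M0 : (0 <= M)%E.
  by apply: esum_ge0 => n _; rewrite lee_fin mulr_ge0 // ltW // bweight_gt0.
have Mup : (M <= (N%:R)%:E * Zpart N a)%E.
  rewrite /Zpart -(@esumZl R _ C (fun n => (bweight a n)%:E) N%:R (ler0n _ _) (fun n _ => w0 n)).
  apply: le_esum => n hn; rewrite -EFinM lee_fin; apply: ler_wpM2r.
    by rewrite ltW // bweight_gt0.
  by rewrite ler_nat; have := le_tot n 0; rewrite (hn : occ_total n = N).
have Mlow : (((N - m)%:R)%:E * g <= M)%E.
  rewrite /g -(@esumZl R _ (C `&` B) (fun n => (bweight a n)%:E) (N - m)%:R (ler0n _ _) (fun n _ => w0 n)).
  apply: le_trans (@esum_sub _ _ (C `&` B) C _ _ _).
  - apply: le_esum => n [_ hn]; rewrite -EFinM lee_fin; apply: ler_wpM2r.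
      by rewrite ltW // bweight_gt0.
    by rewrite ler_nat.
  - by move=> n [].
  - by move=> n _; rewrite lee_fin mulr_ge0 // ltW // bweight_gt0.
have Mf : M \is a fin_num.
  by apply: (fin_between M0 Mup); rewrite fin_numM.
have eP : P = fine g / fine (Zpart N a) by [].
have eM : mean_n0 N a = fine M / fine (Zpart N a) by [].
rewrite eP eM.
move: Z1 hb Mup Mlow g0 b0; rewrite eZ.
rewrite -(fineK gf) -(fineK bf) -(fineK Mf) -EFinD.
move: (fine g) (fine b) (fine M) => gr br Mr.
rewrite !lee_fin /=.
have dge0 : 0 <= (N - m)%:R :> R by [].
move: (N%:R * x ^+ m.+1) => c; move: ((N - m)%:R) dge0 => d dge0.
move=> Z1 hb Mup Mlow g0 b0.
have Zp : 0 < gr + br by apply: lt_le_trans Z1.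
split.
- by rewrite ler_pdivlMr //; nra.
- by rewrite ler_pdivrMr //; nra.
- by rewrite mulrA; apply: ler_wpM2r => //; rewrite invr_ge0 ltW.
- by rewrite ler_pdivrMr // mulrC.
Qed.

End Bounds.
Lemma le_limn_einf_near (R : realType) (u v : (\bar R)^nat) :
  (\forall n \near \oo, (u n <= v n)%E) -> (limn_einf u <= limn_einf v)%E.
Proof.
move=> [k _ hk]; rewrite !limn_einf_lim.
apply: lee_lim; [exact: is_cvg_einfs|exact: is_cvg_einfs|].
exists k => // n /= kn.
apply: le_ereal_inf_tmp => _ [j /= nj <-].
apply: le_trans (hk j _); last by apply: leq_trans kn nj.
by apply: ereal_inf_lbound; exists j.
Qed.

Lemma set_lam (R : realType) (N m : nat) : (0 < N)%N -> (m <= N)%N ->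
  [set n : occ | 1 - (m%:R : R) / N%:R <= (n 0%N)%:R / N%:R] =
  [set n : occ | (N - m <= n 0%N)%N].
Proof.
move=> N0 mN; apply/seteqP; split => n /=.
- rewrite ler_pdivlMr ?ltr0n // mulrBl mul1r divfK ?pnatr_eq0 -?lt0n //.
  by rewrite lerBlDr -natrD ler_nat; lia.
- move=> h; rewrite ler_pdivlMr ?ltr0n // mulrBl mul1r divfK ?pnatr_eq0 -?lt0n //.
  by rewrite lerBlDr -natrD ler_nat; lia.
Qed.

Lemma NxE (R : realType) (a : R) (N k : nat) : (0 < N)%N ->
  N%:R * expR (- a) ^+ k = expR (ln N%:R - a * k%:R).
Proof.
move=> N0; rewrite -expRM_natr mulNr expRD lnK // posrE ltr0n //.
Qed.
Theorem proposition3 (R : realType) (a : nat -> R) (m : nat -> nat) (lam : R) :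
  (forall N, 0 < a N) ->
  (forall N, (m N <= N)%N) ->
  ((let lamN : nat -> R := fun N : nat => 1 - (m N)%:R / N%:R in
    lamN @ \oo --> lam ->
    lam <= 1 ->
    (fun N : nat => (1 - lamN N) * N%:R * a N - ln N%:R) @ \oo --> +oo ->
    (fun N : nat =>
       Pcan N (a N) [set n : occ | lamN N <= (n 0%N)%:R / N%:R]) @ \oo --> (1 : R)
    /\ (lam%:E <= limn_einf (fun N : nat => (mean_n0 N (a N) / N%:R)%:E))%E)
  /\
  ((fun N : nat => N%:R * a N / ln N%:R) @ \oo --> +oo ->
    (fun N : nat => mean_n0 N (a N) / N%:R) @ \oo --> (1 : R))).
Proof.
move=> ha hm; split.
- move=> lamN hlam hlam1 hu.
  set E := fun N : nat => [set n : occ | lamN N <= (n 0%N)%:R / N%:R].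
  set u := fun N : nat => (1 - lamN N) * N%:R * a N - ln N%:R.
  have hP : forall N, (0 < N)%N ->
     [/\ 1 - expR (- u N) <= Pcan N (a N) (E N),
         Pcan N (a N) (E N) <= 1 &
         lamN N * Pcan N (a N) (E N) <= mean_n0 N (a N) / N%:R].
    move=> N N0.
    have [h1 h2 h3 h4] := @P_mean R (a N) (ha N) N (m N) N0 (hm N).
    have nz : N%:R != 0 :> R by rewrite pnatr_eq0 -lt0n.
    have eE : E N = [set n : occ | (N - m N <= n 0%N)%N] by exact: set_lam.
    rewrite eE; split => //.
    + apply: le_trans h1; rewrite lerD2l lerN2.
      have em : (1 - lamN N) * N%:R = (m N)%:R.
        by rewrite /lamN opprB addrCA subrr addr0 divfK.
      rewrite /u em opprB [_%:R * a N]mulrC -NxE //.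
      apply: ler_wpM2l => //; apply: ler_wiXn2l => //.
      by rewrite expR_le1 oppr_le0 ltW.
    + have el : lamN N = (N - m N)%:R / N%:R.
        by rewrite /lamN natrB ?hm // mulrBl divff.
      by rewrite el mulrAC; apply: ler_wpM2r => //.
  have hPc : (fun N => Pcan N (a N) (E N)) @ \oo --> (1 : R).
    apply/cvgrPdist_lt => eps e0.
    move/cvgryPge: hu => /(_ (1 - ln eps)) hu'.
    near=> N.
    have N0 : (0 < N)%N by near: N; exact: nbhs_infty_gt.
    have [h1 h2 _] := hP N N0.
    have hA : 1 - ln eps <= u N by near: N; exact: hu'.
    rewrite ger0_norm ?subr_ge0 //.
    apply: (@le_lt_trans _ _ (expR (- u N))); first by lra.
    rewrite -[X in _ < X]lnK ?posrE // ltr_expR; lra.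
  split => //.
  set v := fun N => lamN N * Pcan N (a N) (E N).
  have hv : v @ \oo --> lam.
    by rewrite -[lam]mulr1; apply: cvgM.
  have hvE : (fun N => (v N)%:E) @ \oo --> lam%:E.
    by apply: cvg_EFin; [exact: nearW | exact: hv].
  rewrite -(cvg_limn_einf_sup hvE).1.
  apply: le_limn_einf_near; near=> N.
  have N0 : (0 < N)%N by near: N; exact: nbhs_infty_gt.
  by rewrite lee_fin; have [_ _ ->] := hP N N0.
- move=> hr; apply/cvgrPdist_lt => eps e0.
  set d := eps / (eps + 3).
  have e3 : 0 < eps + 3 by lra.
  have dE : d * (eps + 3) = eps by rewrite /d divfK // gt_eqF.
  have d0 : 0 < d by rewrite /d divr_gt0.
  have d1 : d < 1 by nra.
  have d3 : 3 * d <= eps by nra.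
  move/cvgryPge: hr => /(_ (2 / d)) hr'.
  near=> N.
  have N2 : (1 < N)%N by near: N; exact: nbhs_infty_gt.
  have hN : 1 / d < N%:R by near: N; exact: nbhs_infty_gtr.
  have hA : 2 / d <= N%:R * a N / ln N%:R by near: N; exact: hr'.
  have N0 : (0 < N)%N by lia.
  have Np : 0 < N%:R :> R by rewrite ltr0n.
  set k := Num.truncn (d * N%:R).
  have kle : k%:R <= d * N%:R by rewrite truncn_le mulr_ge0 // ltW.
  have kgt : d * N%:R < k.+1%:R by exact: truncnS_gt.
  have kN : (k <= N)%N.
    by rewrite -(ler_nat R); apply: le_trans kle _; rewrite ler_piMl // ltW.
  have [h1 h2 h3 h4] := @P_mean R (a N) (ha N) N k N0 kN.
  have lnp : 0 < ln (N%:R : R) by apply: ln_gt0; rewrite ltr1n.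
  have hA' : 2 * ln (N%:R : R) <= d * (N%:R * a N).
    rewrite ler_pdivlMr // in hA.
    have := ler_wpM2l (ltW d0) hA.
    have -> : d * (2 / d * ln (N%:R : R)) = 2 * ln (N%:R : R) by field; rewrite gt_eqF.
    by rewrite mulrA.
  have hx : N%:R * expR (- a N) ^+ k.+1 <= N%:R^-1.
    have eN : (N%:R : R)^-1 = expR (- ln (N%:R : R)) by rewrite expRN lnK // posrE.
    rewrite NxE // eN ler_expR.
    have := ha N; nra.
  have hNd : N%:R^-1 < d.
    rewrite ltr_pdivrMr // in hN.
    by rewrite -[N%:R^-1]mul1r ltr_pdivrMr // mulrC.
  move: h1 h2 h3 h4; rewrite natrB //.
  move: (Pcan _ _ _) (mean_n0 N (a N)) => P M h1 h2 h3 h4.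
  have hP1 : 1 - d <= P.
    move: hx hNd h1; move: (N%:R * _ ^+ _) => X; move: (N%:R^-1 : R) => Y => a1 a2 a3; apply: le_trans a3; rewrite lerD2l lerN2; exact: ltW (le_lt_trans a1 a2).
  have hM : (1 - d) * (1 - d) * N%:R <= M.
    have nk : (1 - d) * N%:R <= N%:R - k%:R by rewrite mulrBl mul1r lerD2l lerN2.
    have d1' : 0 <= 1 - d by rewrite subr_ge0 ltW.
    apply: (@le_trans _ _ ((N%:R - k%:R) * P)); last exact: h3.
    rewrite mulrAC; apply: ler_pM => //; exact: mulr_ge0 d1' (ltW Np).
  have hM1 : M / N%:R <= 1 by rewrite ler_pdivrMr // mul1r.
  have hM2 : 1 - eps < M / N%:R.
    have q : 1 - eps < (1 - d) * (1 - d) by nra.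
    by rewrite ltr_pdivlMr //; apply: lt_le_trans hM; rewrite ltr_pM2r.
  rewrite ger0_norm ?subr_ge0 //; lra.
Unshelve. all: by end_near.
Qed.
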